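(* Let $N=\{1,\dots,n\}$ and $C:2^N\to\mathbb{R}_{\ge0}$. If $\psi\in\mathbb{R}^n$ is in the core of $C$, i.e. $\sum_{i\in N}\psi_i=C(N)$ and $\sum_{i\in S}\psi_i\le C(S)$ for all $S\subseteq N$, then $\|\psi\|_1\le2\max_{S\subseteq N}|C(S)|$. *)

(* Defs.v *)
From mathcomp Require Import all_boot all_order all_algebra.
Set Implicit Arguments. Unset Strict Implicit. Unset Printing Implicit Defensive.
Import Order.TTheory GRing.Theory Num.Theory.
Local Open Scope ring_scope.

Definition in_core (R : numDomainType) (n : nat) (C : {set 'I_n} -> R)
  (psi : 'I_n -> R) : Prop :=
  \sum_(i < n) psi i = C [set: 'I_n] /\
  forall S : {set 'I_n}, \sum_(i in S) psi i <= C S.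

(* Main.v *)
Require Import Defs.
From mathcomp Require Import all_boot all_order all_algebra.
From mathcomp Require Import lra.
Import Order.TTheory GRing.Theory Num.Theory.
Local Open Scope ring_scope.

Lemma le_bigmax_seq (R : realDomainType) (T : eqType) (F : T -> R) (s : seq T) x :
  x \in s -> F x <= \big[Num.max/0]_(y <- s) F y.
Proof.
elim: s => [//|a s IH]; rewrite inE big_cons => /orP [/eqP ->|/IH H].
  by rewrite le_max lexx.
by rewrite le_max H orbT.
Qed.

Theorem lemma2 (R : realFieldType) (n : nat) (C : {set 'I_n} -> R)
  (psi : 'I_n -> R) :
  (forall S, 0 <= C S) ->
  in_core C psi ->
  \sum_(i < n) `|psi i| <= 2 * \big[Num.max/0]_(S : {set 'I_n}) `|C S|.
Proof.
move=> C0 [Hsum Hle].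
set P := [set i : 'I_n | 0 <= psi i].
have HM : `|C P| <= \big[Num.max/0]_(S : {set 'I_n}) `|C S|.
  exact: (@le_bigmax_seq _ _ (fun S => `|C S|) _ _ (mem_index_enum P)).
have E1 : \sum_(i < n) `|psi i| = \sum_(i < n | i \in P) psi i - \sum_(i < n | i \notin P) psi i.
  rewrite (bigID (fun i => i \in P)) /=; congr (_ + _).
    by apply: eq_bigr => i; rewrite inE => /ger0_norm.
  rewrite -sumrN; apply: eq_bigr => i; rewrite inE -ltNge => /ltr0_norm //.
have E2 : \sum_(i < n) psi i = \sum_(i < n | i \in P) psi i + \sum_(i < n | i \notin P) psi i.
  by rewrite (bigID (fun i => i \in P)).
have HP : \sum_(i < n | i \in P) psi i <= C P.
  by have := Hle P; rewrite (eq_bigl (fun i => i \in P)).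
have := C0 [set: 'I_n]; have := C0 P.
rewrite -(ger0_norm (C0 P)) in HP.
rewrite E1; rewrite Hsum in E2; lra.
Qed.
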